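(* Let $\mathcal{M}$ be a von Neumann algebra with a faithful tracial state $\tau$, and let $U\in\mathcal{M}$ be a unitary. The following are equivalent: (1) $U=U^*$; (2) the operator $(U+iI)/\sqrt{2}$ is a unitary; (3) there exists a unitary $V\in\mathcal{M}$ such that $\sqrt{2}\,\operatorname{Re}\tau(U^*V)-\operatorname{Im}\tau(U-\sqrt{2}V)=2$. *)

(* Defs.v *)
(* unital *-algebras over the complex numbers R[i]
   (R : realType, complex from mathcomp-real-closed) with a faithful tracial state. *)
From HB Require Import structures.
From mathcomp Require Import all_boot all_order all_algebra.
From mathcomp Require Import reals.
From mathcomp Require Export complex.
Set Implicit Arguments. Unset Strict Implicit. Unset Printing Implicit Defensive.
Import Order.TTheory GRing.Theory Num.Theory.
Local Open Scope ring_scope.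

Section StarAlg.
Variables (C : numClosedFieldType) (A : algType C).

Definition is_star (star : A -> A) : Prop :=
  [/\ involutive star,
      forall x y, star (x + y) = star x + star y,
      forall (c : C) x, star (c *: x) = c^* *: star x &
      forall x y, star (x * y) = star y * star x].

Definition faithful_tracial_state (star : A -> A) (tau : A -> C) : Prop :=
  [/\ (forall x y, tau (x + y) = tau x + tau y) /\
        (forall (c : C) x, tau (c *: x) = c * tau x),
      tau 1 = 1,
      forall x, 0 <= tau (star x * x),
      forall x, tau (star x * x) = 0 -> x = 0 &
      forall x y, tau (x * y) = tau (y * x)].

Definition unitary (star : A -> A) (U : A) : Prop :=
  star U * U = 1 /\ U * star U = 1.
End StarAlg.

(* Main.v *)
Require Import Defs.
From HB Require Import structures.
From mathcomp Require Import all_boot all_order all_algebra.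
From mathcomp Require Import reals.
From mathcomp Require Import complex.
From mathcomp Require Import ring.
Import Order.TTheory GRing.Theory Num.Theory.
Local Open Scope ring_scope.
Section S.
Variables (R : realType) (A : algType R[i]) (star : A -> A) (tau : A -> R[i]).
Local Notation C := (R[i]).

Hypothesis Hstar : is_star star.
Hypothesis Htau : faithful_tracial_state star tau.

Lemma starK : involutive star. Proof. by case: Hstar. Qed.
Lemma starD x y : star (x + y) = star x + star y. Proof. by case: Hstar. Qed.
Lemma starZ c x : star (c *: x) = c^* *: star x. Proof. by case: Hstar. Qed.
Lemma starM x y : star (x * y) = star y * star x. Proof. by case: Hstar. Qed.
Lemma star1 : star 1 = 1.
Proof.
transitivity (star (star 1 * 1)); first by rewrite starM starK mulr1.
by rewrite mulr1 starK.
Qed.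
Lemma starZ1 c : star (c *: 1) = c^* *: 1. Proof. by rewrite starZ star1. Qed.
Lemma starN x : star (- x) = - star x.
Proof. by rewrite -scaleN1r starZ rmorphN1 scaleN1r. Qed.

Lemma tauD x y : tau (x + y) = tau x + tau y. Proof. by case: Htau => [[H1 H2] _ _ _ _]; auto. Qed.
Lemma tauZ c x : tau (c *: x) = c * tau x. Proof. by case: Htau => [[H1 H2] _ _ _ _]; auto. Qed.
Lemma tau1 : tau 1 = 1. Proof. by case: Htau. Qed.
Lemma tau_ge0 x : 0 <= tau (star x * x). Proof. by case: Htau. Qed.
Lemma tau_faithful x : tau (star x * x) = 0 -> x = 0. Proof. by case: Htau => _ _ _ H _; apply: H. Qed.
Lemma tauN x : tau (- x) = - tau x.
Proof. by rewrite -scaleN1r tauZ mulN1r. Qed.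
Lemma tauB x y : tau (x - y) = tau x - tau y. Proof. by rewrite tauD tauN. Qed.
Lemma tauZ1 c : tau (c *: 1) = c. Proof. by rewrite tauZ tau1 mulr1. Qed.

Lemma mulE1 (Y Z : A) (c d : C) :
  (Y + c *: 1) * (Z + d *: 1) = Y * Z + c *: Z + d *: Y + (c * d) *: 1.
Proof.
rewrite mulrDl !mulrDr -!scalerAl -!scalerAr !mul1r !mulr1 scalerA.
by rewrite !addrA; congr (_ + _); rewrite -!addrA; congr (_ + _); rewrite addrC.
Qed.

Lemma tau_star x : tau (star x) = (tau x)^*.
Proof.
set a := tau x; set b := tau (star x); set n := tau (star x * x).
have nR : n^* = n by apply: conj_Creal; apply: ger0_real; apply: tau_ge0.
have H1 : (1 + a + b + n)^* = 1 + a + b + n.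
  apply: conj_Creal; apply: ger0_real.
  have := tau_ge0 (1 + x).
  by rewrite starD star1 mulrDl !mulrDr !mul1r mulr1 !tauD tau1 !addrA.
have H2 : (1 + 'i * a - 'i * b + n)^* = 1 + 'i * a - 'i * b + n.
  apply: conj_Creal; apply: ger0_real.
  have := tau_ge0 (1 + 'i *: x).
  rewrite starD star1 starZ conjCi mulrDl !mulrDr !mul1r mulr1 -!scalerAl -!scalerAr.
  by rewrite scalerA mulNr -expr2 sqrCi opprK scale1r !tauD !tauZ tau1 !addrA mulNr.
rewrite !(rmorphD, rmorphN, rmorphM, rmorph1) /= conjCi nR in H1 H2.
apply/eqP; rewrite eq_sym -subr_eq0.
have e : 2%:R * (a^* - b) = ((1 + a^* + b^* + n) - (1 + a + b + n)) + 'i * ((1 + - 'i * a^* - - 'i * b^* + n) - (1 + 'i * a - 'i * b + n)) - ('i * 'i + 1) * (- a^* + b^* - a + b).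
  ring.
rewrite -expr2 sqrCi addNr mul0r subr0 H1 H2 !subrr mulr0 addr0 in e.
by move/eqP: e; rewrite mulf_eq0 pnatr_eq0 /=.
Qed.

Lemma starB x y : star (x - y) = star x - star y. Proof. by rewrite starD starN. Qed.
Lemma tauCM x y : tau (x * y) = tau (y * x). Proof. by case: Htau. Qed.

Lemma iNi : - 'i * 'i = 1 :> C.
Proof. by rewrite mulNr -expr2 sqrCi opprK. Qed.
Lemma iiN : 'i * - 'i = 1 :> C.
Proof. by rewrite mulrN -expr2 sqrCi opprK. Qed.
Lemma cancel1 (c : C) (x : A) : 1 + (- c) *: x + c *: x + 1 = 1 + 1.
Proof. by rewrite scaleNr addrNK. Qed.
Lemma cancel2 (c : C) (x : A) : 1 + c *: x + (- c) *: x + 1 = 1 + 1.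
Proof. by rewrite scaleNr addrK. Qed.
Lemma half2 : 2%:R^-1 *: (1 + 1) = 1 :> A.
Proof. by rewrite -mulr2n -(@scaler_nat C A) scalerA mulVf ?pnatr_eq0 // scale1r. Qed.
Lemma ii2 : 'i * ('i + 'i) = -1 - 1 :> C.
Proof. by rewrite mulrDr -expr2 sqrCi. Qed.
Let s : C := sqrtC 2%:R.
Lemma sR : s^* = s.
Proof. by apply: conj_Creal; apply: sqrtC_real; rewrite ler0n. Qed.
Lemma s2 : s * s = 2%:R.
Proof. by rewrite -expr2 sqrtCK. Qed.
Lemma s_neq0 : s != 0.
Proof. by rewrite sqrtC_eq0 pnatr_eq0. Qed.
Lemma sVR : (s^-1)^* = s^-1.
Proof. by rewrite fmorphV /= sR. Qed.
Lemma sVsV : s^-1 * s^-1 = 2%:R^-1.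
Proof. by rewrite -invfM s2. Qed.
Lemma two_neq0 : 2%:R != 0 :> C.
Proof. by rewrite pnatr_eq0. Qed.

Variable U : A.
Hypothesis HU : unitary star U.
Let W := s^-1 *: (U + 'i *: 1).

Lemma starW : star W = s^-1 *: (star U + (- 'i) *: 1).
Proof. by rewrite /W starZ sVR starD starZ1 conjCi. Qed.

Lemma L21 : unitary star W -> U = star U.
Proof.
case=> H _; move: H; rewrite starW -scalerAl -scalerAr scalerA mulE1.
case: HU => -> _.
rewrite iNi scale1r sVsV => H.
have T : 1 + - 'i *: U + 'i *: star U + 1 = 1 + 1.
  move/(congr1 (fun v => 2%:R *: v)): H; rewrite scalerA mulfV ?two_neq0 // scale1r.
  by rewrite scaler_nat mulr2n.
have E : - 'i *: U + 'i *: star U = 0.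
  apply: (@addrI _ (1 + 1)); rewrite addr0 -[RHS]T.
  by rewrite [RHS]addrC !addrA.
have : 'i *: (star U - U) = 0 by rewrite scalerBr -scaleNr addrC.
move/eqP; rewrite scaler_eq0 (negbTE (@neq0Ci C)) /= subr_eq0 => /eqP.
by move=> ->.
Qed.

Lemma L12 : U = star U -> unitary star W.
Proof.
move=> Hs; have UU : U * U = 1 by case: HU; rewrite -Hs.
rewrite /unitary starW -Hs -!scalerAl -!scalerAr !scalerA !mulE1 UU sVsV.
rewrite iNi iiN scale1r cancel1 cancel2 half2 //.
Qed.

Let E (V : A) := s * 'Re (tau (star U * V)) - 'Im (tau (U - s *: V)).

Lemma L23 : unitary star W -> E W = 2%:R.
Proof.
move=> HW; have Hs := L21 HW.
have UU : star U * U = 1 by case: HU.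
have uR : (tau U)^* = tau U by rewrite -tau_star -Hs.
have sW : s *: W = U + 'i *: 1 by rewrite /W scalerA mulfV ?s_neq0 // scale1r.
rewrite /E sW opprD addrA subrr add0r tauN tauZ1.
rewrite /W -scalerAr mulrDr UU -scalerAr mulr1 tauZ tauD tauZ tau1 -Hs.
rewrite ReE ImE !(rmorphM, rmorphD, rmorphN) /= sVR conjCi uR rmorph1 opprK.
rewrite ii2.
field.
exact: s_neq0.
Qed.

Lemma L32 V : unitary star V -> E V = 2%:R -> V = W.
Proof.
move=> [VV _] HE.
set X := s *: V - (U + 'i *: 1).
have UU : star U * U = 1 by case: HU.
have key : tau (star X * X) = 4%:R - 2%:R * E V.
  rewrite /X starB starZ sR starD starZ1 conjCi.
  rewrite mulrBl !mulrBr -!scalerAl -!scalerAr scalerA VV mulE1 UU.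
  rewrite mulrDl mulrDr -!scalerAl -!scalerAr mul1r mulr1.
  rewrite !(tauB, tauD, tauN, tauZ) tau1.
  have -> : tau (star V * U) = (tau (star U * V))^* by rewrite -tau_star starM starK.
  rewrite !tau_star.
  rewrite ReE ImE !(rmorphM, rmorphD, rmorphN, rmorphB) /= sR ?conjCi.
  rewrite ?iNi.
  have -> : s * s = 2%:R by exact: s2.
  field.
  by [].
have : tau (star X * X) = 0 by rewrite key HE; ring.
move/tau_faithful/eqP; rewrite subr_eq0 => /eqP sV.
by rewrite /W -sV scalerA mulVf ?s_neq0 // scale1r.
Qed.

Lemma main :
  [<-> U = star U;
       unitary star ((sqrtC 2%:R)^-1 *: (U + 'i *: 1));
       exists V : A, unitary star V /\
         sqrtC 2%:R * 'Re (tau (star U * V)) - 'Im (tau (U - sqrtC 2%:R *: V)) = 2%:R].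
Proof.
tfae.
- exact: L12.
- move=> HW; exists W; split => //; exact: L23.
- by move=> [V [HV HE]]; apply: L21; rewrite -(@L32 V HV HE).
Qed.
End S.

Theorem lemma2p1 (R : realType) (A : algType R[i]) (star : A -> A) (tau : A -> R[i])
  (Hstar : is_star star) (Htau : faithful_tracial_state star tau)
  (U : A) (HU : unitary star U) :
  [<-> U = star U;
       unitary star ((sqrtC 2)^-1 *: (U + 'i *: 1));
       exists V : A, unitary star V /\
         sqrtC 2 * 'Re (tau (star U * V)) - 'Im (tau (U - sqrtC 2 *: V)) = 2].
Proof. have H := (@main R A star tau Hstar Htau U HU). exact H. Qed.
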